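(* Let $a,b,e\in\mathbb Z$ with $a\neq0$, $e>0$, such that $h_2(j)=aj^2+bj+e$ satisfies $h_2(j)\ge0$ for all integers $j\ge0$ (so $h_2\in\mathcal H_0$). Then $\operatorname{hdepth}(h_2)\le 13$.
   Context: Let $\mathcal H_0$ denote the set of functions $h:\mathbb Z_{\ge 0}\to\mathbb Z_{\ge 0}$ with $h(0)>0$. For $h\in\mathcal H_0$ and integers $0\le k\le d$, put $\beta_k^d(h)=\sum_{j=0}^k(-1)^{k-j}\binom{d-j}{k-j}h(j)$. The Hilbert depth of $h$ is $\operatorname{hdepth}(h)=\max\{d\in\mathbb Z_{\ge0}:\ \beta_k^d(h)\ge 0\text{ for all }0\le k\le d\}$; this set contains $d=0$ and is known to be bounded above by $\lfloor h(1)/h(0)\rfloor$, so the maximum exists. *)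

(* Defs.v *)
From mathcomp Require Import all_boot all_order all_algebra.
Set Implicit Arguments. Unset Strict Implicit. Unset Printing Implicit Defensive.
Import Order.TTheory GRing.Theory Num.Theory.
Local Open Scope ring_scope.

(* h : Z_{>=0} -> Z_{>=0}; we represent values in int and require nonnegativity
   explicitly where needed (membership in H_0). *)
Definition in_H0 (h : nat -> int) : Prop := 0 < h 0%N /\ forall j, 0 <= h j.

Definition beta (h : nat -> int) (d k : nat) : int :=
  \sum_(0 <= j < k.+1) (-1) ^+ (k - j) * ('C(d - j, k - j))%:R * h j.

Definition hdepth_admissible (h : nat -> int) (d : nat) : Prop :=
  forall k : nat, (k <= d)%N -> 0 <= beta h d k.

Definition is_hdepth (h : nat -> int) (n : nat) : Prop :=
  hdepth_admissible h n /\ forall d, hdepth_admissible h d -> (d <= n)%N.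

(* Main.v *)
Require Import Defs.
From mathcomp Require Import all_boot all_order all_algebra.
From mathcomp Require Import zify ring lra.
Import Order.TTheory GRing.Theory Num.Theory.
Local Open Scope ring_scope.

Lemma bin2e (n : nat) : (2 * 'C(n.+1,2) = n.+1 * n)%N.
Proof. elim: n => [|n IH] //. rewrite binS mulnDr IH bin1. lia. Qed.

Lemma bin3e (n : nat) : (6 * 'C(n.+2,3) = n.+2 * n.+1 * n)%N.
Proof.
elim: n => [|n IH] //. rewrite binS mulnDr IH.
have := bin2e n.+1. lia.
Qed.

Lemma key (a b e : int) (m : nat) :
  let h := fun j : nat => a * (j%:Z) ^+ 2 + b * j%:Z + e in
  let n : int := (m.+3)%:Z in
  6 * beta h m.+3 3 + (2*n - 6) * 2 * beta h m.+3 2 + (n^+2 - 3*n - 12) * beta h m.+3 1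
  = 4 * (9 - n) * a + (- 2 * n^+2 + 18 * n - 12) * e.
Proof.
move=> h n.
rewrite /beta unlock /= !subSS !subn0 /= bin1 bin0 /h.
have H2 := bin2e m.+1. have H3 := bin3e m.+1.
have := congr1 (fun x : nat => x%:R : int) H2.
have := congr1 (fun x : nat => x%:R : int) H3.
rewrite /= !natrM /n => E3 E2.
have := congr1 (fun x : nat => x%:R : int) (bin2e m.+2).
rewrite /= !natrM => E2'.
rewrite /n -!natz. apply/eqP; rewrite -subr_eq0; apply/eqP.
transitivity (-e*(6*('C(m.+3,3)%:R : int) - (m.+3)%:R * (m.+2)%:R * (m.+1)%:R)
  + 3*(a+b+e)*(2*('C(m.+2,2)%:R : int) - (m.+2)%:R * (m.+1)%:R)
  + (2*n-6)*e*(2*('C(m.+3,2)%:R : int) - (m.+3)%:R * (m.+2)%:R)).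
  rewrite !bin1 !bin0. ring.
by rewrite E3 E2 E2' !subrr !mulr0 !addr0.
Qed.

From Stdlib Require Import Classical.

Lemma bound {a b e : int} {d : nat} : 0 < a -> 0 < e ->
  hdepth_admissible (fun j => a * (j%:Z) ^+ 2 + b * j%:Z + e) d -> (d <= 9)%N.
Proof.
move=> Ha He Had.
case: (leqP d 9) => // Hd.
have [m Em] : exists m, d = m.+3 by exists (d - 3)%N; lia.
subst d.
have B1 := Had 1%N isT. have B2 := Had 2%N isT. have B3 := Had 3%N isT.
have K := key a b e m. simpl in K.
set n : int := (m.+3)%:Z in K.
have Hn : 10 <= n by rewrite /n lez_nat.
set h := (fun j : nat => _) in B1 B2 B3 K.
have c2 : 0 <= (2*n - 6) * 2 by lia.
have c1 : 0 <= n^+2 - 3*n - 12 by rewrite expr2; nia.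
have L : 0 <= 6 * beta h m.+3 3 + (2*n - 6) * 2 * beta h m.+3 2 + (n^+2 - 3*n - 12) * beta h m.+3 1.
  apply: addr_ge0; [apply: addr_ge0|]; apply: mulr_ge0 => //.
have R : 4 * (9 - n) * a + (- 2 * n^+2 + 18 * n - 12) * e < 0.
  have r1 : 4 * (9 - n) * a < 0 by rewrite pmulr_llt0 //; lia.  
  have r2 : (- 2 * n^+2 + 18 * n - 12) * e < 0.
    rewrite pmulr_llt0 //; rewrite expr2; nia.
  lia.
rewrite K in L. lia.
Qed.

Lemma apos {a b e : int} : a != 0 -> 0 < e ->
  (forall j : nat, 0 <= a * (j%:Z) ^+ 2 + b * j%:Z + e) -> 0 < a.
Proof.
move=> Ha0 He H.
case: (ltrP 0 a) => // Ha.
have Ha1 : a <= -1 by move: Ha0 Ha; lia.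
have := H (`|b|%N + `|e|%N + 1)%N.
have Hb : b <= `|b|%N by rewrite abszE ler_norm.
have Hb' : - b <= `|b|%N by rewrite abszE -normrN ler_norm.
set x : int := ((`|b| + `|e|) + 1)%N.
have Hx : x = (`|b|%N : int) + e + 1.
  by rewrite /x !PoszD (gez0_abs (ltW He)).
rewrite Hx expr2. nia.
Qed.

Lemma beta00 (h : nat -> int) d : beta h d 0 = h 0%N.
Proof. by rewrite /beta unlock /= subnn bin0 expr0 !mul1r addr0. Qed.

Theorem corollary2p10 (a b e : int) :
  a != 0 -> 0 < e ->
  (forall j : nat, 0 <= a * (j%:Z) ^+ 2 + b * j%:Z + e) ->
  in_H0 (fun j => a * (j%:Z) ^+ 2 + b * j%:Z + e) /\
  exists n : nat,
    is_hdepth (fun j => a * (j%:Z) ^+ 2 + b * j%:Z + e) n /\ (n <= 13)%N.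
Proof.
move=> Ha0 He H.
have Ha := apos Ha0 He H.
split.
  split => //. by rewrite expr2 !mulr0 add0r.
set h := (fun j : nat => a * (j%:Z) ^+ 2 + b * j%:Z + e).
have P0 : hdepth_admissible h 0.
  move=> k; rewrite leqn0 => /eqP ->; rewrite beta00 /h expr2 !mulr0 add0r; exact: ltW.
have Hb : forall d, hdepth_admissible h d -> (d <= 13)%N.
  move=> d Hd; have := bound Ha He Hd; lia.
have G : forall M, exists n, (n <= M)%N /\ hdepth_admissible h n /\
   forall d, hdepth_admissible h d -> (d <= M)%N -> (d <= n)%N.
  elim=> [|M [n [HnM [Pn Hn]]]].
    by exists 0%N; split=> //; split=> // d _; lia.
  case: (classic (hdepth_admissible h M.+1)) => HM.
    by exists M.+1; split=> //; split=> // d _; lia.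
  exists n; split; first lia. split=> // d Pd HdM.
  apply: Hn => //. case: (ltngtP d M.+1) => //; [lia| move=> E; by subst d].
have [n [HnM [Pn Hn]]] := G 13%N.
exists n; split=> //; split=> // d Pd. apply: Hn => //. exact: Hb.
Qed.
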